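(* Consider a Bayesian persuasion setting with binary state space $\Theta=\{\theta_1,\theta_2\}$, binary action space $A=\{a_1,a_2\}$, a finite signal space $\Sigma$ with $|\Sigma|\ge 2$, common prior with $p=\Pr_\mu[\theta=\theta_1]$, sender utility $u_S:\Theta\times A\to\mathbb{R}$ and receiver utility $u_R:\Theta\times A\to\mathbb{R}$. Assume the receiver is state-matching: $u_R(\theta_1,a_1)\ge u_R(\theta_1,a_2)$ and $u_R(\theta_2,a_2)\ge u_R(\theta_2,a_1)$; and the sender is action-matching: $u_S(\theta_1,a_1)\ge u_S(\theta_2,a_1)$ and $u_S(\theta_2,a_2)\ge u_S(\theta_1,a_2)$. Let $(\ell,h)$ and $(\ell',h')$ be two feasible constraints, i.e. $\ell\le p\le h$ and $\ell'\le p\le h'$, such that $(\ell,h)$ is more binding than $(\ell',h')$, i.e. $\ell'\le \ell$ and $h\le h'$. Let $\Phi$ and $\Phi'$ be the sets of sender-optimal signaling schemes under the constraints $(\ell,h)$ and $(\ell',h')$ respectively. Let $\varphi\in\Phi$ maximize the receiver's expected utility $\mathbb{E}_{\theta\sim\mu,\sigma\sim\varphi(\theta),a\sim\pi_\varphi(\sigma)}[u_R(\theta,a)]$ over $\Phi$, and let $\varphi'\in\Phi'$ maximize the receiver's expected utility $\mathbb{E}_{\theta\sim\mu,\sigma\sim\varphi'(\theta),a\sim\pi_{\varphi'}(\sigma)}[u_R(\theta,a)]$ over $\Phi'$. Then $$\mathbb{E}_{\theta\sim\mu,\sigma\sim\varphi(\theta),a\sim\pi_\varphi(\sigma)}[u_R(\theta,a)]\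 \ge\ \mathbb{E}_{\theta\sim\mu,\sigma\sim\varphi'(\theta),a\sim\pi_{\varphi'}(\sigma)}[u_R(\theta,a)].$$
   Context: The sender commits to a signaling scheme $\varphi:\Theta\to\Delta(\Sigma)$ before observing the state $\theta\sim\mu$, then sends $\sigma\sim\varphi(\theta)$. The receiver observes $\sigma$ and chooses an action via a (possibly randomized) strategy $\pi:\Sigma\to\Delta(A)$. A constraint $(\ell,h)$ with $0\le\ell\le h\le 1$ requires that the overall probability (over the randomness of the state, the sender's signal and the receiver's randomization) that the receiver plays $a_1$ lies in $[\ell,h]$, i.e. $\ell\le \Pr_{\mu,\varphi,\pi}[\pi(\varphi(\theta))=a_1]\le h$. Under a constraint, the receiver's best response $\pi_\varphi$ to $\varphi$ is a strategy satisfying the constraint that maximizes her expected utility $\mathbb{E}[u_R(\theta,a)]$ among all strategies satisfying the constraint, with ties broken in favor of the sender. A signaling scheme is sender-optimal under a constraint if it maximizes the sender's expected utility $\mathbb{E}_{\theta\sim\mu,\sigma\sim\varphi(\theta),a\sim\pi_\varphi(\sigma)}[u_S(\theta,a)]$ given that the receiver plays her constrained best response. *)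

(* Defs.v *)
From mathcomp Require Import all_boot all_order all_algebra.
From mathcomp Require Import reals.
Set Implicit Arguments. Unset Strict Implicit. Unset Printing Implicit Defensive.
Import Order.TTheory GRing.Theory Num.Theory.
Local Open Scope ring_scope.

(* Conventions: states Theta = bool with  true = theta_1, false = theta_2;
   actions A = bool with true = a_1, false = a_2.
   Prior: mu(theta_1) = p, mu(theta_2) = 1 - p.
   A signaling scheme phi : bool -> Sigma -> R, phi th s = Pr[sigma = s | theta = th].
   A receiver (mixed) strategy pi : Sigma -> R, pi s = Pr[a = a_1 | sigma = s]
   (so a_2 is played with probability 1 - pi s). *)

Section Persuasion.
Variables (R : realType) (Sigma : finType).

Definition prior (p : R) (th : bool) : R := if th then p else 1 - p.

Definition is_scheme (phi : bool -> Sigma -> R) : Prop :=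
  forall th, (forall s, 0 <= phi th s) /\ \sum_(s : Sigma) phi th s = 1.

Definition is_strategy (pi : Sigma -> R) : Prop :=
  forall s, 0 <= pi s <= 1.

Definition prob_a1 (p : R) (phi : bool -> Sigma -> R) (pi : Sigma -> R) : R :=
  \sum_(th : bool) prior p th * \sum_(s : Sigma) phi th s * pi s.

Definition exp_util (u : bool -> bool -> R) (p : R)
    (phi : bool -> Sigma -> R) (pi : Sigma -> R) : R :=
  \sum_(th : bool) prior p th *
    \sum_(s : Sigma) phi th s * (pi s * u th true + (1 - pi s) * u th false).

Definition satisfies (p l h : R) (phi : bool -> Sigma -> R) (pi : Sigma -> R) : Prop :=
  is_strategy pi /\ l <= prob_a1 p phi pi <= h.

Definition receiver_opt (uR : bool -> bool -> R) (p l h : R)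
    (phi : bool -> Sigma -> R) (pi : Sigma -> R) : Prop :=
  satisfies p l h phi pi /\
  forall pi', satisfies p l h phi pi' -> exp_util uR p phi pi' <= exp_util uR p phi pi.

Definition best_response (uS uR : bool -> bool -> R) (p l h : R)
    (phi : bool -> Sigma -> R) (pi : Sigma -> R) : Prop :=
  receiver_opt uR p l h phi pi /\
  forall pi', receiver_opt uR p l h phi pi' -> exp_util uS p phi pi' <= exp_util uS p phi pi.

Definition sender_optimal (uS uR : bool -> bool -> R) (p l h : R)
    (phi : bool -> Sigma -> R) : Prop :=
  is_scheme phi /\
  exists pi, best_response uS uR p l h phi pi /\
  forall phi' pi', is_scheme phi' -> best_response uS uR p l h phi' pi' ->
    exp_util uS p phi' pi' <= exp_util uS p phi pi.

Definition receiver_best_sender_optimal (uS uR : bool -> bool -> R) (p l h : R)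
    (phi : bool -> Sigma -> R) (pi : Sigma -> R) : Prop :=
  sender_optimal uS uR p l h phi /\ best_response uS uR p l h phi pi /\
  forall psi rho, sender_optimal uS uR p l h psi ->
    best_response uS uR p l h psi rho ->
    exp_util uR p psi rho <= exp_util uR p phi pi.

End Persuasion.

(* Main.v *)
Require Import Defs.
From mathcomp Require Import all_boot all_order all_algebra.
From mathcomp Require Import reals.
From mathcomp Require Import ring lra.
Import Order.TTheory GRing.Theory Num.Theory.
Local Open Scope ring_scope.

Section Aux.
Variables (R : realType) (Sigma : finType) (p : R) (uS uR : bool -> bool -> R).
Hypothesis p01 : 0 <= p <= 1.

Definition Sm (phi : bool -> Sigma -> R) (pi : Sigma -> R) th : R :=
  \sum_(s : Sigma) phi th s * pi s.
Definition Xo phi pi := p * Sm phi pi true.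
Definition Yo phi pi := (1 - p) * Sm phi pi false.
Definition al := uR true true - uR true false.
Definition be := uR false false - uR false true.
Definition ga := uS true true - uS true false.
Definition de := uS false true - uS false false.
Definition KR := p * uR true false + (1 - p) * uR false false.
Definition KS := p * uS true false + (1 - p) * uS false false.

Lemma Sm_aff phi pi th (a b : R) : \sum_s phi th s = 1 ->
  Sm phi (fun s => a + b * pi s) th = a + b * Sm phi pi th.
Proof.
move=> H; rewrite /Sm.
have -> : \sum_s phi th s * (a + b * pi s) = \sum_s (phi th s * a + b * (phi th s * pi s)).
  by apply: eq_bigr => s _; ring.
by rewrite big_split /= -mulr_suml -mulr_sumr H mul1r.
Qed.

Lemma Xo_aff phi pi a b : is_scheme phi ->
  Xo phi (fun s => a + b * pi s) = p * a + b * Xo phi pi.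
Proof. by move=> H; rewrite /Xo Sm_aff ?(H true).2 //; ring. Qed.

Lemma Yo_aff phi pi a b : is_scheme phi ->
  Yo phi (fun s => a + b * pi s) = (1 - p) * a + b * Yo phi pi.
Proof. by move=> H; rewrite /Yo Sm_aff ?(H false).2 //; ring. Qed.

Lemma probE phi pi : prob_a1 p phi pi = Xo phi pi + Yo phi pi.
Proof. by rewrite /prob_a1 big_bool. Qed.

Lemma exp_utilE u phi pi : is_scheme phi -> exp_util u p phi pi =
  p * u true false + (1 - p) * u false false
  + Xo phi pi * (u true true - u true false) + Yo phi pi * (u false true - u false false).
Proof.
move=> Hs; rewrite /exp_util big_bool /=.
have E th : \sum_s phi th s * (pi s * u th true + (1 - pi s) * u th false)
   = u th false + (u th true - u th false) * Sm phi pi th.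
  rewrite -Sm_aff ?(Hs th).2 // /Sm; apply: eq_bigr => s _; ring.
by rewrite !E /prior /Xo /Yo /=; ring.
Qed.

Lemma eR phi pi : is_scheme phi -> exp_util uR p phi pi = KR + al * Xo phi pi - be * Yo phi pi.
Proof. by move=> H; rewrite exp_utilE // /KR /al /be; ring. Qed.

Lemma eS phi pi : is_scheme phi -> exp_util uS p phi pi = KS + ga * Xo phi pi + de * Yo phi pi.
Proof. by move=> H; rewrite exp_utilE // /KS /ga /de; ring. Qed.

Lemma Sm_bnd phi pi th : is_scheme phi -> is_strategy pi -> 0 <= Sm phi pi th <= 1.
Proof.
move=> Hs Hp; have [H0 H1] := Hs th; apply/andP; split.
  by apply: sumr_ge0 => s _; apply: mulr_ge0 => //; case/andP: (Hp s).
rewrite -H1; apply: ler_sum => s _; apply: ler_piMr => //; by case/andP: (Hp s).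
Qed.

Lemma XY_bnd phi pi : is_scheme phi -> is_strategy pi ->
  [/\ 0 <= Xo phi pi, Xo phi pi <= p, 0 <= Yo phi pi & Yo phi pi <= 1 - p].
Proof.
move=> Hs Hp; have /andP[a1 a2] := Sm_bnd phi pi true Hs Hp.
have /andP[b1 b2] := Sm_bnd phi pi false Hs Hp.
case/andP: p01 => p0 p1.
rewrite /Xo /Yo; split; nra.
Qed.


Lemma RO_A (l h : R) phi pi : is_scheme phi -> 0 <= l -> receiver_opt uR p l h phi pi ->
  0 <= al * Xo phi pi - be * Yo phi pi \/ Xo phi pi + Yo phi pi <= l.
Proof.
move=> Hs Hl [[Hst /andP[Hc1 Hc2]] Hopt]; rewrite probE in Hc1 Hc2.
case: (leP 0 (al * Xo phi pi - be * Yo phi pi)) => Hf; first by left.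
case: (leP (Xo phi pi + Yo phi pi) l) => HS; first by right.
exfalso.
have S0 : 0 < Xo phi pi + Yo phi pi by exact: le_lt_trans Hl HS.
set c := l / (Xo phi pi + Yo phi pi).
have c0 : 0 <= c by rewrite divr_ge0 // ltW.
have c1 : c < 1 by rewrite /c ltr_pdivrMr // mul1r.
have cS : c * (Xo phi pi + Yo phi pi) = l by rewrite /c divfK // gt_eqF.
pose pi' := fun s => 0 + c * pi s.
have Hsat : satisfies p l h phi pi'.
  split.
    move=> s; rewrite /pi' add0r; case/andP: (Hst s) => ? ?; apply/andP; split; nra.
  rewrite probE Xo_aff // Yo_aff // !mulr0 !add0r -mulrDr cS lexx /=; lra.
have := Hopt pi' Hsat; rewrite !eR // Xo_aff // Yo_aff // !mulr0 !add0r.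
nra.
Qed.

Lemma RO_B (l h : R) phi pi : is_scheme phi -> h <= 1 -> receiver_opt uR p l h phi pi ->
  al * (p - Xo phi pi) - be * (1 - p - Yo phi pi) <= 0 \/ h <= Xo phi pi + Yo phi pi.
Proof.
move=> Hs Hh [[Hst /andP[Hc1 Hc2]] Hopt]; rewrite probE in Hc1 Hc2.
case: (leP (al * (p - Xo phi pi) - be * (1 - p - Yo phi pi)) 0) => Hf; first by left.
case: (leP h (Xo phi pi + Yo phi pi)) => HS; first by right.
exfalso.
have S0 : 0 < 1 - (Xo phi pi + Yo phi pi) by lra.
set c := (1 - h) / (1 - (Xo phi pi + Yo phi pi)).
have c0 : 0 <= c by apply: divr_ge0; lra.
have c1 : c < 1 by rewrite /c ltr_pdivrMr // mul1r; lra.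
have cS : c * (1 - (Xo phi pi + Yo phi pi)) = 1 - h by rewrite /c divfK // gt_eqF.
pose pi' := fun s => (1 - c) + c * pi s.
have Hsat : satisfies p l h phi pi'.
  split.
    move=> s; rewrite /pi'; case/andP: (Hst s) => ? ?; apply/andP; split; nra.
  rewrite probE Xo_aff // Yo_aff //; apply/andP; split; nra.
have := Hopt pi' Hsat; rewrite !eR // Xo_aff // Yo_aff //.
nra.
Qed.

Lemma sum2 (F : Sigma -> R) s1 s2 : s1 != s2 ->
  (forall s, s != s1 -> s != s2 -> F s = 0) -> \sum_s F s = F s1 + F s2.
Proof.
move=> ne H; rewrite (bigD1 s1) //= (bigD1 s2) /=; last by rewrite eq_sym ne.
by rewrite big1 ?addr0 // => s /andP[a b]; apply: H.
Qed.

Lemma divK01 (x c : R) : 0 <= x <= c -> c * (x / c) = x /\ 0 <= x / c <= 1.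
Proof.
case/andP=> x0 xc; case: (eqVneq c 0) => [c0|cn0].
  have -> : x = 0 by apply/le_anti; rewrite x0 -c0 xc.
  by rewrite c0 !mul0r lexx ler01.
have cp : 0 < c by rewrite lt_def cn0 (le_trans x0 xc).
split; first by rewrite mulrC divfK.
apply/andP; split; first by apply: divr_ge0 => //; apply: ltW.
by rewrite ler_pdivrMr // mul1r.
Qed.

Lemma explicit (l h X0 Y0 : R) (s1 s2 : Sigma) : s1 != s2 -> 0 <= X0 <= p -> 0 <= Y0 <= 1 - p ->
  l <= X0 + Y0 <= h -> 0 <= al * X0 - be * Y0 -> al * (p - X0) - be * (1 - p - Y0) <= 0 ->
  (forall phi pi, is_scheme phi -> receiver_opt uR p l h phi pi ->
     ga * Xo phi pi + de * Yo phi pi <= ga * X0 + de * Y0) ->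
  exists psi rho, sender_optimal uS uR p l h psi /\ best_response uS uR p l h psi rho
    /\ Xo psi rho = X0 /\ Yo psi rho = Y0.
Proof.
move=> ne HX HY HS HF1 HF2 Hb.
have [E1 /andP[q10 q11]] := divK01 _ _ HX.
have [E2 /andP[q20 q21]] := divK01 _ _ HY.
set q1 := X0 / p in E1 q10 q11; set q2 := Y0 / (1 - p) in E2 q20 q21.
pose psi (th : bool) (s : Sigma) : R := if s == s1 then (if th then q1 else q2)
  else if s == s2 then (if th then 1 - q1 else 1 - q2) else 0.
pose rho (s : Sigma) : R := if s == s1 then 1 else 0.
have ne' : s2 != s1 by rewrite eq_sym.
have SmE pi th : Sm psi pi th = psi th s1 * pi s1 + psi th s2 * pi s2.
  by rewrite /Sm (@sum2 _ s1 s2 ne) // => s a b; rewrite /psi (negbTE a) (negbTE b) mul0r.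
have Hs : is_scheme psi.
  move=> th; split.
    by move=> s; rewrite /psi; case: (s == s1); case: (s == s2); case: th; lra.
  rewrite (@sum2 _ s1 s2 ne) /psi ?eqxx ?(negbTE ne') //; first by case: th; ring.
  by move=> s a b; rewrite (negbTE a) (negbTE b).
have XE pi : Xo psi pi = X0 * pi s1 + (p - X0) * pi s2.
  by rewrite /Xo SmE /psi !eqxx (negbTE ne') -E1; ring.
have YE pi : Yo psi pi = Y0 * pi s1 + (1 - p - Y0) * pi s2.
  by rewrite /Yo SmE /psi !eqxx (negbTE ne') -E2; ring.
have Hrs : is_strategy rho by move=> s; rewrite /rho; case: ifP => _; rewrite ?lexx ?ler01.
have Xr : Xo psi rho = X0 by rewrite XE /rho eqxx (negbTE ne'); ring.
have Yr : Yo psi rho = Y0 by rewrite YE /rho eqxx (negbTE ne'); ring.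
have HRO : receiver_opt uR p l h psi rho.
  split; first by split => //; rewrite probE Xr Yr.
  move=> pi' [Hst _]; rewrite !eR // XE Xr Yr YE.
  case/andP: (Hst s1) => a0 a1; case/andP: (Hst s2) => b0 b1; nra.
have HBR : best_response uS uR p l h psi rho.
  split => // pi' HR'; have := Hb _ _ Hs HR'; rewrite !eS // Xr Yr; lra.
exists psi, rho; split; last by [].
split => //; exists rho; split => //.
move=> phi' pi' Hs' [HR' _]; rewrite !eS // Xr Yr; have := Hb _ _ Hs' HR'; lra.
Qed.

Lemma ystar (h : R) : 0 <= al -> 0 <= be -> p <= h -> exists y : R,
  [/\ 0 <= y, y <= h - p, be * y <= al * p & (y = h - p \/ (0 < be /\ be * y = al * p))].
Proof.
move=> a0 b0 ph; case/andP: p01 => p0 p1.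
case: (leP (be * (h - p)) (al * p)) => H.
  exists (h - p); split => //; [lra | by left].
have bp : 0 < be.
  rewrite lt_def b0 andbT; apply/eqP => e; move: H; rewrite e mul0r; nra.
exists (al * p / be); split.
- by apply: divr_ge0 => //; apply: mulr_ge0.
- by rewrite ler_pdivrMr //; nra.
- by rewrite mulrC divfK ?gt_eqF.
- by right; split => //; rewrite mulrC divfK ?gt_eqF.
Qed.

Lemma xbar (l : R) : 0 <= al -> 0 <= be -> l <= p -> exists x : R,
  [/\ 0 <= x, x <= p - l, al * x <= be * (1 - p) & (x = p - l \/ (0 < al /\ al * x = be * (1 - p)))].
Proof.
move=> a0 b0 lp; case/andP: p01 => p0 p1.
case: (leP (al * (p - l)) (be * (1 - p))) => H.
  exists (p - l); split => //; [lra | by left].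
have ap : 0 < al.
  rewrite lt_def a0 andbT; apply/eqP => e; move: H; rewrite e mul0r; nra.
exists (be * (1 - p) / al); split.
- by apply: divr_ge0 => //; apply: mulr_ge0 => //; lra.
- by rewrite ler_pdivrMr //; nra.
- by rewrite mulrC divfK ?gt_eqF.
- by right; split => //; rewrite mulrC divfK ?gt_eqF.
Qed.

Lemma NA (l h y : R) phi pi : 0 <= al -> 0 <= be -> 0 <= l -> l <= p -> 0 <= de -> de <= ga -> 0 <= y -> y <= h - p ->
  be * y <= al * p -> (y = h - p \/ (0 < be /\ be * y = al * p)) ->
  is_scheme phi -> receiver_opt uR p l h phi pi ->
  ga * Xo phi pi + de * Yo phi pi <= ga * p + de * y.
Proof.
move=> a00 b00 hl lp d0 dg y0 yh yb yc Hs HR.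
have [[Hst /andP[c1 c2]] _] := HR; rewrite probE in c1 c2.
have [x0 x1 y0' y1] := XY_bnd _ _ Hs Hst.
case: (RO_A _ _ _ _ Hs hl HR) => [Hf|HS].
  case: yc => [ey|[b0 eb]].
    rewrite ey; nra.
  have : Yo phi pi <= y by rewrite -(ler_pM2l b0); nra.
  nra.
nra.
Qed.

Lemma NB (l h x : R) phi pi : 0 <= al -> 0 <= be -> h <= 1 -> p <= h -> ga < 0 -> de <= ga -> 0 <= x -> x <= p - l ->
  al * x <= be * (1 - p) -> (x = p - l \/ (0 < al /\ al * x = be * (1 - p))) ->
  is_scheme phi -> receiver_opt uR p l h phi pi ->
  ga * Xo phi pi + de * Yo phi pi <= ga * (p - x).
Proof.
move=> a00 b00 hh ph g0 dg x0 xl xb xc Hs HR.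
have [[Hst /andP[c1 c2]] _] := HR; rewrite probE in c1 c2.
have [x0' x1 y0 y1] := XY_bnd _ _ Hs Hst.
case: (RO_B _ _ _ _ Hs hh HR) => [Hf|HS].
  case: xc => [ex|[a0 ea]].
    rewrite ex; nra.
  have : p - x <= Xo phi pi by rewrite -(ler_pM2l a0); nra.
  nra.
nra.
Qed.

Lemma main (l h l' h' : R) (phi phi' : bool -> Sigma -> R) (pi pi' : Sigma -> R) :
  (2 <= #|Sigma|)%N ->
  uR true false <= uR true true ->
  uR false true <= uR false false ->
  uS false true <= uS true true ->
  uS true false <= uS false false ->
  0 <= l <= h -> h <= 1 -> 0 <= l' <= h' -> h' <= 1 ->
  l <= p <= h -> l' <= p <= h' ->
  l' <= l -> h <= h' ->
  receiver_best_sender_optimal uS uR p l h phi pi ->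
  receiver_best_sender_optimal uS uR p l' h' phi' pi' ->
  exp_util uR p phi' pi' <= exp_util uR p phi pi.
Proof.
move=> card H1 H2 H3 H4 /andP[hl _] hh /andP[hl' _] hh' /andP[lp ph] /andP[lp' ph'] ll hh2.
move=> [[Hs _] [HBR Hbest]] [[Hs' [pi0 [HBR0 Hopt0]]] [HBR' _]].
have [s1 [s2 [_ _ ne]]] := card_gt1P card.
have a0 : 0 <= al by rewrite /al subr_ge0.
have b0 : 0 <= be by rewrite /be subr_ge0.
have gd : de <= ga by rewrite /de /ga; lra.
have Hg : forall (psi : bool -> Sigma -> R) (rho : Sigma -> R), best_response uS uR p l' h' psi rho -> is_scheme psi ->
    exp_util uS p psi rho <= exp_util uS p phi' pi'.
  move=> psi rho Hbr Hps.
  case: HBR0 => HR0 _; case: HBR' => _ Ht'.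
  exact: (le_trans (Hopt0 _ _ Hps Hbr) (Ht' _ HR0)).
have [HR' _] := HBR'; have [[Hst' _] _] := HR'.
have [X0' X1' Y0' Y1'] := XY_bnd _ _ Hs' Hst'.
case/andP: p01 => p0 p1.
rewrite (eR phi') //.
case: (ltP 0 de) => Hde.
  have [y [y0 yh yb yc]] := ystar h a0 b0 ph.
  have [y' [y0' yh' yb' yc']] := ystar h' a0 b0 ph'.
  have [psi [rho [Hso [Hbr [EX EY]]]]] := explicit l h p y s1 s2 ne
    ltac:(apply/andP; split; lra) ltac:(apply/andP; split; lra) ltac:(apply/andP; split; lra)
    ltac:(lra) ltac:(nra)
    (fun phi pi Hs HR => NA l h y phi pi a0 b0 hl lp (ltW Hde) gd y0 yh yb yc Hs HR).
  have := Hbest _ _ Hso Hbr; rewrite !eR ?EX ?EY //; last by case: Hso.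
  have [psi' [rho' [Hso' [Hbr' [EX' EY']]]]] := explicit l' h' p y' s1 s2 ne
    ltac:(apply/andP; split; lra) ltac:(apply/andP; split; lra) ltac:(apply/andP; split; lra)
    ltac:(lra) ltac:(nra)
    (fun phi pi Hs HR => NA l' h' y' phi pi a0 b0 hl' lp' (ltW Hde) gd y0' yh' yb' yc' Hs HR).
  have := Hg _ _ Hbr' (proj1 Hso'); rewrite !eS ?EX' ?EY' //; last by case: Hso'.
  move=> Hgi Hfi.
  have : y' <= Yo phi' pi' by rewrite -(ler_pM2l Hde); nra.
  move=> Yy.
  have : be * y <= be * y'.
    by case: yc' => [->|[_ ->]]; nra.
  nra.
case: (ltP ga 0) => Hga.
  have [x [x0 xl xb xc]] := xbar l a0 b0 lp.
  have [x' [x0' xl' xb' xc']] := xbar l' a0 b0 lp'.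
  have [psi [rho [Hso [Hbr [EX EY]]]]] := explicit l h (p - x) 0 s1 s2 ne
    ltac:(apply/andP; split; lra) ltac:(apply/andP; split; lra) ltac:(apply/andP; split; lra)
    ltac:(nra) ltac:(nra)
    (fun phi pi Hs HR => ltac:(rewrite mulr0 addr0; exact: (NB l h x phi pi a0 b0 hh ph Hga gd x0 xl xb xc Hs HR))).
  have := Hbest _ _ Hso Hbr; rewrite !eR ?EX ?EY //; last by case: Hso.
  have [psi' [rho' [Hso' [Hbr' [EX' EY']]]]] := explicit l' h' (p - x') 0 s1 s2 ne
    ltac:(apply/andP; split; lra) ltac:(apply/andP; split; lra) ltac:(apply/andP; split; lra)
    ltac:(nra) ltac:(nra)
    (fun phi pi Hs HR => ltac:(rewrite mulr0 addr0; exact: (NB l' h' x' phi pi a0 b0 hh' ph' Hga gd x0' xl' xb' xc' Hs HR))).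
  have := Hg _ _ Hbr' (proj1 Hso'); rewrite !eS ?EX' ?EY' //; last by case: Hso'.
  move=> Hgi Hfi.
  have : Xo phi' pi' <= p - x'.
    rewrite -(ler_nM2l Hga); nra.
  move=> Xx.
  have : al * x <= al * x'.
    by case: xc' => [->|[_ ->]]; nra.
  nra.
have [psi [rho [Hso [Hbr [EX EY]]]]] := explicit l h p 0 s1 s2 ne
  ltac:(apply/andP; split; lra) ltac:(apply/andP; split; lra) ltac:(apply/andP; split; lra)
  ltac:(nra) ltac:(nra)
  (fun phi pi Hs HR => ltac:(
     have [[Hst _] _] := HR; have [? ? ? ?] := XY_bnd _ _ Hs Hst; nra)).
have := Hbest _ _ Hso Hbr; rewrite !eR ?EX ?EY //; last by case: Hso.
nra.
Qed.

End Aux.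

Theorem theorem2 (R : realType) (Sigma : finType)
    (p : R) (uS uR : bool -> bool -> R) (l h l' h' : R)
    (phi phi' : bool -> Sigma -> R) (pi pi' : Sigma -> R) :
  (2 <= #|Sigma|)%N ->
  0 <= p <= 1 ->
  uR true false <= uR true true ->
  uR false true <= uR false false ->
  uS false true <= uS true true ->
  uS true false <= uS false false ->
  0 <= l <= h -> h <= 1 -> 0 <= l' <= h' -> h' <= 1 ->
  l <= p <= h -> l' <= p <= h' ->
  l' <= l -> h <= h' ->
  receiver_best_sender_optimal uS uR p l h phi pi ->
  receiver_best_sender_optimal uS uR p l' h' phi' pi' ->
  exp_util uR p phi' pi' <= exp_util uR p phi pi.
Proof.
move=> card p01; exact: (@main R Sigma p uS uR p01 l h l' h' phi phi' pi pi' card).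
Qed.
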